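(* None of the 20 rules of BOOL can be omitted in the Characterization Theorem: for each rule $r$ of BOOL there is a non-failed Boolean CSP that is closed under the applications of all rules of BOOL other than $r$ but is not hyper-arc consistent. For instance, for $r=$ AND4, the CSP $\langle x\wedge y=z;\ x=0,\ y\in\{0,1\},\ z\in\{0,1\}\rangle$ is such a CSP.
   Context: A Boolean CSP is $\langle \mathcal C; x_1\in D_1,\dots,x_n\in D_n\rangle$ with $D_i\subseteq\{0,1\}$ and $\mathcal C$ a finite set of Boolean constraints, each of one of the forms $u=v$ (relation $\{(0,0),(1,1)\}$), $\neg u=v$ ($\{(0,1),(1,0)\}$), $u\wedge v=w$ ($\{(0,0,0),(0,1,0),(1,0,0),(1,1,1)\}$), $u\vee v=w$ ($\{(0,0,0),(0,1,1),(1,0,1),(1,1,1)\}$) on distinct variables; each constraint is understood as restricted to the current domains. We write $x=d$ for $x\in\{d\}$. A CSP is failed if some domain is empty. A constraint is solved if it equals the product of the domains of its variables. $\phi$ is a reformulation of $\psi$ if removing solved constraints from both yields the same CSP. The proof system BOOL consists of the rules (constraint, premise $\rightarrow$ conclusion; $x,y,z$ schematic): EQU1: $x=y$, $x=1\rightarrow y=1$; EQU2: $x=y$, $y=1\rightarrow x=1$; EQU3: $x=y$, $x=0\rightarrow y=0$; EQU4: $x=y$, $y=0\rightarrow x=0$; NOT1: $\neg x=y$, $x=1\rightarrow y=0$; NOT2: $\neg x=y$, $x=0\rightarrow y=1$; NOT3: $\neg x=y$, $y=1\rightarrow x=0$; NOT4: $\neg x=y$, $y=0\rightarrow x=1$;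 AND1: $x\wedge y=z$, $x=1,y=1\rightarrow z=1$; AND2: $x\wedge y=z$, $x=1,z=0\rightarrow y=0$; AND3: $x\wedge y=z$, $y=1,z=0\rightarrow x=0$; AND4: $x\wedge y=z$, $x=0\rightarrow z=0$; AND5: $x\wedge y=z$, $y=0\rightarrow z=0$; AND6: $x\wedge y=z$, $z=1\rightarrow x=1,y=1$; OR1: $x\vee y=z$, $x=1\rightarrow z=1$; OR2: $x\vee y=z$, $x=0,y=0\rightarrow z=0$; OR3: $x\vee y=z$, $x=0,z=1\rightarrow y=1$; OR4: $x\vee y=z$, $y=0,z=1\rightarrow x=1$; OR5: $x\vee y=z$, $y=1\rightarrow z=1$; OR6: $x\vee y=z$, $z=0\rightarrow x=0,y=0$. On CSPs, such a rule with constraint $c$, premise $X=s$, conclusion $Y=t$ acts as: applicable to a CSP containing (an instance of) $c$ in which each variable of $X$ has domain exactly $\{s_i\}$; the result removes $c$ and replaces the domain $D$ of each variable $y_j$ of $Y$ by $D\cap\{t_j\}$. An application is relevant if its result is not a reformulation of the original CSP. A CSP is closed under the applications of a rule $R$ if $R$ cannot be applied to it or no application of it is relevant. A constraint is hyper-arc consistent if for every variable of it each value in its domain participates in a solution to the constraint; a CSP is hyper-arc consistent if every constraint of it is. *)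

(* Defs.v *)
From HB Require Import structures.
From mathcomp Require Import all_boot.
Set Implicit Arguments. Unset Strict Implicit. Unset Printing Implicit Defensive.

Inductive kind := KEq | KNot | KAnd | KOr.

Definition kind_eqb (a b : kind) : bool :=
  match a, b with
  | KEq, KEq | KNot, KNot | KAnd, KAnd | KOr, KOr => true
  | _, _ => false end.
Lemma kind_eqP : Equality.axiom kind_eqb.
Proof. by case; case; constructor. Qed.
HB.instance Definition _ := hasDecEq.Build kind kind_eqP.

Definition arity (k : kind) : nat :=
  match k with KEq | KNot => 2 | KAnd | KOr => 3 end.

(* The relation of a constraint kind, on the tuple of values of its variables
   (ordered as x,y for x=y and ~x=y, and x,y,z for x/\y=z, x\/y=z). *)
Definition krel (k : kind) (s : seq bool) : bool :=
  match k, s with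
  | KEq, [:: a; b] => a == b
  | KNot, [:: a; b] => b == ~~ a
  | KAnd, [:: a; b; c] => c == a && b
  | KOr, [:: a; b; c] => c == a || b
  | _, _ => false
  end.

Definition constr (n : nat) := (kind * seq 'I_n)%type.

Definition wf_constr n (c : constr n) : bool := (size c.2 == arity c.1) && uniq c.2.

(* A Boolean CSP on variables x_0..x_(n-1): a finite set of constraints
   (given as a list, read as a set) and domains D_i ⊆ {0,1}. *)
Record csp (n : nat) := CSP { cons : seq (constr n); dom : 'I_n -> {set bool} }.

Definition wf_csp n (P : csp n) : Prop := forall c, c \in cons P -> wf_constr c.

Definition failed n (P : csp n) : Prop := exists x, dom P x = set0.

Definition in_dom n (D : 'I_n -> {set bool}) (c : constr n) (s : seq bool) : bool :=
  all2 (fun x a => a \in D x) c.2 s.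

(* Solved: the constraint restricted to the domains equals the product of the domains. *)
Definition solved n (D : 'I_n -> {set bool}) (c : constr n) : Prop :=
  forall s, in_dom D c s = (in_dom D c s && krel c.1 s).

Definition hac_constr n (D : 'I_n -> {set bool}) (c : constr n) : Prop :=
  forall i x a, onth c.2 i = Some x -> a \in D x ->
    exists s, [/\ in_dom D c s, krel c.1 s & onth s i = Some a].

Definition hac n (P : csp n) : Prop := forall c, c \in cons P -> hac_constr (dom P) c.

(* phi is a reformulation of psi: removing solved constraints from both yields the
   same CSP (same constraint set, same domains). *)
Definition reformulation n (phi psi : csp n) : Prop :=
  (forall c, (c \in cons phi /\ ~ solved (dom phi) c) <->
             (c \in cons psi /\ ~ solved (dom psi) c)) /\
  (forall x, dom phi x = dom psi x).

(* A rule: constraint kind (schematic variables = positions 0,1,2 standing for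
   x,y,z), premise and conclusion as lists of (position, value). *)
Record rule := Rule { rkind : kind; prem : seq (nat * bool); concl : seq (nat * bool) }.

Definition applies n (r : rule) (P : csp n) (c : constr n) (P' : csp n) : Prop :=
  [/\ c \in cons P, c.1 = rkind r,
      (forall p, p \in prem r ->
         exists2 x, onth c.2 p.1 = Some x & dom P x = [set p.2]),
      cons P' = filter (predC1 c) (cons P) &
      (forall x, dom P' x =
         [set a in dom P x | all (fun p => (onth c.2 p.1 == Some x) ==> (a == p.2)) (concl r)])].

Definition relevant n (r : rule) (P : csp n) (c : constr n) (P' : csp n) : Prop :=
  applies r P c P' /\ ~ reformulation P' P.

(* Closed under the applications of r: no application of r is relevant. *)
Definition closed_under n (r : rule) (P : csp n) : Prop :=
  forall c P', applies r P c P' -> reformulation P' P.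

Inductive rname :=
  EQU1 | EQU2 | EQU3 | EQU4 | NOT1 | NOT2 | NOT3 | NOT4
| AND1 | AND2 | AND3 | AND4 | AND5 | AND6
| OR1 | OR2 | OR3 | OR4 | OR5 | OR6.

Definition rule_of (r : rname) : rule :=
  match r with
  | EQU1 => Rule KEq [:: (0, true)] [:: (1, true)]
  | EQU2 => Rule KEq [:: (1, true)] [:: (0, true)]
  | EQU3 => Rule KEq [:: (0, false)] [:: (1, false)]
  | EQU4 => Rule KEq [:: (1, false)] [:: (0, false)]
  | NOT1 => Rule KNot [:: (0, true)] [:: (1, false)]
  | NOT2 => Rule KNot [:: (0, false)] [:: (1, true)]
  | NOT3 => Rule KNot [:: (1, true)] [:: (0, false)]
  | NOT4 => Rule KNot [:: (1, false)] [:: (0, true)]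
  | AND1 => Rule KAnd [:: (0, true); (1, true)] [:: (2, true)]
  | AND2 => Rule KAnd [:: (0, true); (2, false)] [:: (1, false)]
  | AND3 => Rule KAnd [:: (1, true); (2, false)] [:: (0, false)]
  | AND4 => Rule KAnd [:: (0, false)] [:: (2, false)]
  | AND5 => Rule KAnd [:: (1, false)] [:: (2, false)]
  | AND6 => Rule KAnd [:: (2, true)] [:: (0, true); (1, true)]
  | OR1 => Rule KOr [:: (0, true)] [:: (2, true)]
  | OR2 => Rule KOr [:: (0, false); (1, false)] [:: (2, false)]
  | OR3 => Rule KOr [:: (0, false); (2, true)] [:: (1, true)]
  | OR4 => Rule KOr [:: (1, false); (2, true)] [:: (0, true)]
  | OR5 => Rule KOr [:: (1, true)] [:: (2, true)]
  | OR6 => Rule KOr [:: (2, false)] [:: (0, false); (1, false)]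
  end.

Definition witness (r : rname) n (P : csp n) : Prop :=
  [/\ wf_csp P, ~ failed P,
      (forall r', r' <> r -> closed_under (rule_of r') P) & ~ hac P].

Definition ex_and4 : csp 3 :=
  CSP [:: (KAnd, [:: inord 0; inord 1; inord 2])]
      (fun i : 'I_3 => if val i == 0 then [set false] else setT).

(* Main.v *)
Require Import Defs.
From mathcomp Require Import all_boot.

Definition o0 : 'I_3 := @Ordinal 3 0 isT.
Definition o1 : 'I_3 := @Ordinal 3 1 isT.
Definition o2 : 'I_3 := @Ordinal 3 2 isT.

Definition mk (k : kind) (d0 d1 d2 : {set bool}) : csp 3 :=
  CSP [:: (k, take (arity k) [:: o0; o1; o2])]
      (fun i : 'I_3 => if val i == 0 then d0 else if val i == 1 then d1 else d2).

Ltac bad_prem Hprem p :=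
  let x := fresh "x" in let Hx := fresh "Hx" in let Hd := fresh "Hd" in
  have [x Hx Hd] := Hprem p ltac:(by rewrite /= !inE ?eqxx ?orbT);
  move: Hd; move: Hx => /= [<-] /setP Hd;
  move: (Hd true) (Hd false); by rewrite /= !inE.

Ltac closed_tac :=
  let c := fresh "c" in let P' := fresh "P'" in
  let Hc := fresh "Hc" in let Hk := fresh "Hk" in let Hprem := fresh "Hprem" in
  move=> c P' [Hc Hk Hprem _ _];
  move: Hc; rewrite inE => /eqP Ec; subst c;
  simpl in Hk; try discriminate;
  first [ bad_prem Hprem (0, true) | bad_prem Hprem (0, false)
        | bad_prem Hprem (1, true) | bad_prem Hprem (1, false)
        | bad_prem Hprem (2, true) | bad_prem Hprem (2, false) ].

Ltac nf_tac :=
  let Hd := fresh "Hd" in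
  case=> [[[|[|[|?]]] ?]] //= /setP Hd;
  move: (Hd true) (Hd false); by rewrite /= !inE.

Ltac nh_tac i x a :=
  let H := fresh "H" in let s := fresh "s" in
  let H1 := fresh "H1" in let H2 := fresh "H2" in let H3 := fresh "H3" in
  let b0 := fresh "b" in let b1 := fresh "b" in let b2 := fresh "b" in
  move=> H;
  have [s [H1 H2 H3]] := H _ (mem_head _ _) i x a erefl ltac:(by rewrite /= !inE);
  move: s H1 H2 H3 => [|b0 [|b1 [|b2 [|? ?]]]] //=;
  repeat (case: b0 || case: b1 || case: b2); by rewrite /in_dom /= !inE.

Ltac wit_tac i x a :=
  split;
  [ by move=> ?; rewrite inE => /eqP ->
  | nf_tac
  | let r' := fresh "r" in let Hr' := fresh "Hr" in
    move=> r' Hr'; case: r' Hr' => Hr'; (try by case: Hr'); closed_tac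
  | nh_tac i x a ].

Lemma w_EQU1 : witness EQU1 (mk KEq [set true] setT setT).
Proof. wit_tac 1 o1 false. Qed.

Lemma w_EQU2 : witness EQU2 (mk KEq setT [set true] setT).
Proof. wit_tac 0 o0 false. Qed.

Lemma w_EQU3 : witness EQU3 (mk KEq [set false] setT setT).
Proof. wit_tac 1 o1 true. Qed.

Lemma w_EQU4 : witness EQU4 (mk KEq setT [set false] setT).
Proof. wit_tac 0 o0 true. Qed.

Lemma w_NOT1 : witness NOT1 (mk KNot [set true] setT setT).
Proof. wit_tac 1 o1 true. Qed.

Lemma w_NOT2 : witness NOT2 (mk KNot [set false] setT setT).
Proof. wit_tac 1 o1 false. Qed.

Lemma w_NOT3 : witness NOT3 (mk KNot setT [set true] setT).
Proof. wit_tac 0 o0 true. Qed.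

Lemma w_NOT4 : witness NOT4 (mk KNot setT [set false] setT).
Proof. wit_tac 0 o0 false. Qed.

Lemma w_AND1 : witness AND1 (mk KAnd [set true] [set true] setT).
Proof. wit_tac 2 o2 false. Qed.

Lemma w_AND2 : witness AND2 (mk KAnd [set true] setT [set false]).
Proof. wit_tac 1 o1 true. Qed.

Lemma w_AND3 : witness AND3 (mk KAnd setT [set true] [set false]).
Proof. wit_tac 0 o0 true. Qed.

Lemma w_AND4 : witness AND4 (mk KAnd [set false] setT setT).
Proof. wit_tac 2 o2 true. Qed.

Lemma w_AND5 : witness AND5 (mk KAnd setT [set false] setT).
Proof. wit_tac 2 o2 true. Qed.

Lemma w_AND6 : witness AND6 (mk KAnd setT setT [set true]).
Proof. wit_tac 0 o0 false. Qed.

Lemma w_OR1 : witness OR1 (mk KOr [set true] setT setT).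
Proof. wit_tac 2 o2 false. Qed.

Lemma w_OR2 : witness OR2 (mk KOr [set false] [set false] setT).
Proof. wit_tac 2 o2 true. Qed.

Lemma w_OR3 : witness OR3 (mk KOr [set false] setT [set true]).
Proof. wit_tac 1 o1 false. Qed.

Lemma w_OR4 : witness OR4 (mk KOr setT [set false] [set true]).
Proof. wit_tac 0 o0 false. Qed.

Lemma w_OR5 : witness OR5 (mk KOr setT [set true] setT).
Proof. wit_tac 2 o2 false. Qed.

Lemma w_OR6 : witness OR6 (mk KOr setT setT [set false]).
Proof. wit_tac 0 o0 true. Qed.

Lemma w_ex : witness AND4 ex_and4.
Proof.
have -> : ex_and4 = CSP [:: (KAnd, [:: o0; o1; o2])]
      (fun i : 'I_3 => if val i == 0 then [set false] else setT).
  rewrite /ex_and4; congr (CSP [:: (_, [:: _; _; _])] _); apply: val_inj; by rewrite /= inordK.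
wit_tac 2 o2 true.
Qed.

Theorem mainTheorem6 :
  (forall r : rname, exists n (P : csp n), witness r P) /\ witness AND4 ex_and4.
Proof.
split; last exact: w_ex.
case; eexists; eexists; [ exact: w_EQU1 | exact: w_EQU2 | exact: w_EQU3 | exact: w_EQU4
 | exact: w_NOT1 | exact: w_NOT2 | exact: w_NOT3 | exact: w_NOT4
 | exact: w_AND1 | exact: w_AND2 | exact: w_AND3 | exact: w_AND4 | exact: w_AND5 | exact: w_AND6
 | exact: w_OR1 | exact: w_OR2 | exact: w_OR3 | exact: w_OR4 | exact: w_OR5 | exact: w_OR6 ].
Qed.
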